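(* Let $T:X\to X$ be a map with $\mathcal F_T(n)=|\{x\in X: T^nx=x\}|<\infty$ for all $n\ge1$. Let $m\ge1$ have prime factorization $m=p_1^{a_1}\cdots p_r^{a_r}$, let $n\ge1$, and let $J=\mathcal D(m)\setminus\mathcal D(n)$, where $\mathcal D(k)$ denotes the set of prime divisors of $k$. Write $\boldsymbol p_J^{\boldsymbol a_J}=\prod_{p_j\in J}p_j^{a_j}$. Then \[ \mathcal O_{T^m}(n)=\sum_{d\mid \boldsymbol p_J^{\boldsymbol a_J}}\frac{m}{d}\,\mathcal O_T\!\left(\frac{mn}{d}\right), \] where $T^m$ is the $m$th iterate of $T$.
   Context: For a map $S:X\to X$, a closed orbit of length $n$ is a set $\{x,Sx,\dots,S^{n-1}x\}$ with $S^nx=x$ having exactly $n$ elements; $\mathcal O_S(n)$ denotes the number of closed orbits of length $n$ under $S$. *)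

(* Defs.v *)
From mathcomp Require Import all_boot.
From Stdlib Require Import List ClassicalEpsilon.

Set Implicit Arguments.
Unset Strict Implicit.
Unset Printing Implicit Defensive.

Definition fix_finite (X : Type) (S : X -> X) (n : nat) : Prop :=
  exists l : list X, forall x, iter n S x = x <-> In x l.

Definition orbit_list (X : Type) (S : X -> X) (n : nat) (x : X) : list X :=
  map (fun k => iter k S x) (iota 0 n).

Definition closed_orbit (X : Type) (S : X -> X) (n : nat) (A : X -> Prop) : Prop :=
  exists x : X,
    iter n S x = x /\
    A = (fun y => In y (orbit_list S n x)) /\
    NoDup (orbit_list S n x).

Definition has_card (X : Type) (P : (X -> Prop) -> Prop) (k : nat) : Prop :=
  exists l : list (X -> Prop),
    NoDup l /\ (forall A, P A <-> In A l) /\ length l = k.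

(* O_S(n): the number of closed orbits of length n under S
   (chosen classically; well defined whenever this collection is finite). *)
Definition O_count (X : Type) (S : X -> X) (n : nat) : nat :=
  epsilon (inhabits 0%N) (fun k => has_card (closed_orbit S n) k).

Definition pJaJ (m n : nat) : nat :=
  \prod_(p <- primes m | ~~ (p %| n)) p ^ logn p m.

(* Main.v *)
Require Import Defs.
From HB Require Import structures.
From Stdlib Require Import List ClassicalEpsilon FunctionalExtensionality PropExtensionality.
From mathcomp Require Import all_boot zify.

Set Implicit Arguments.
Unset Strict Implicit.
Unset Printing Implicit Defensive.

Definition cdec (P : Prop) : bool :=
  if excluded_middle_informative P then true else false.
Lemma cdecP (P : Prop) : reflect P (cdec P).
Proof. by rewrite /cdec; case: excluded_middle_informative => h; constructor. Qed.

Definition ceq (T : Type) (x y : T) : bool := cdec (x = y).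
Lemma ceqP (T : Type) : Equality.axiom (@ceq T).
Proof. by move=> x y; apply: cdecP. Qed.
Definition C (T : Type) : Type := T.
HB.instance Definition _ (T : Type) := hasDecEq.Build (C T) (@ceqP T).

Lemma InP (T : Type) (x : C T) (s : seq (C T)) : reflect (In x s) (x \in s).
Proof.
elim: s => [|a s IH] /=; first by constructor.
rewrite inE; apply: (iffP orP) => [[/eqP->|/IH]|[->|/IH]]; auto.
Qed.

Lemma uniq_NoDup (T : Type) (s : seq (C T)) : uniq s -> NoDup s.
Proof.
elim: s => [|a s IH] /=; first by constructor.
by case/andP=> h1 h2; constructor; [move/InP; apply/negP|apply: IH].
Qed.

Lemma NoDup_uniq (T : Type) (s : seq (C T)) : NoDup s -> uniq s.
Proof.
elim: s => [|a s IH] //= h; inversion h; subst.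
by apply/andP; split; [apply/negP => /InP | apply: IH].
Qed.

Lemma orbit_listE (X : Type) (S : X -> X) k x :
  orbit_list S k x = map (fun j => iter j S x) (iota 0 k).
Proof. rewrite /orbit_list; by elim: (iota 0 k) => //= a s ->. Qed.

Lemma has_card_uniq (X : Type) (P : (X -> Prop) -> Prop) a b :
  has_card P a -> has_card P b -> a = b.
Proof.
move=> [l1 [n1 [m1 <-]]] [l2 [n2 [m2 <-]]].
apply/eqP; rewrite eqn_leq; apply/andP; split; apply/leP.
  by apply: NoDup_incl_length => // A /m1 /m2.
by apply: NoDup_incl_length => // A /m2 /m1.
Qed.

Lemma O_countE (X : Type) (S : X -> X) k c :
  has_card (closed_orbit S k) c -> O_count S k = c.
Proof.
move=> h; apply: (has_card_uniq _ h); rewrite /O_count.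
by apply: epsilon_spec; exists c.
Qed.
Definition isper (X : Type) (S : X -> X) k x : Prop :=
  0 < k /\ iter k S x = x /\ (forall j, 0 < j < k -> iter j S x <> x).

Section Per.
Variables (X : Type) (S : X -> X).

Lemma iter_mul k x q : iter k S x = x -> iter (q * k) S x = x.
Proof. by move=> h; elim: q => //= q IH; rewrite mulSn iterD IH h. Qed.

Lemma iter_mod k x j : iter k S x = x -> iter j S x = iter (j %% k) S x.
Proof.
by move=> h; rewrite {1}(divn_eq j k) addnC iterD iter_mul.
Qed.

Lemma per_dvd k x j : isper S k x -> (iter j S x = x <-> k %| j).
Proof.
move=> [k0 [hk hmin]]; split.
  rewrite (iter_mod j hk) => h; apply/eqP; apply: contraTeq isT => nz.
  have: 0 < j %% k < k by rewrite lt0n nz ltn_mod k0.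
  by move/hmin.
by move/dvdnP=> [q ->]; apply: iter_mul.
Qed.

Lemma dvd_per k x : 0 < k -> (forall j, iter j S x = x <-> k %| j) -> isper S k x.
Proof.
move=> k0 h; split=> //; split; first by apply/h.
move=> j /andP[j0 jk] /h /(dvdn_leq j0); by rewrite leqNgt jk.
Qed.

Lemma per_unique k k' x : isper S k x -> isper S k' x -> k = k'.
Proof.
move=> h h'; apply/eqP; rewrite eqn_dvd.
apply/andP; split; [apply/(per_dvd _ h) | apply/(per_dvd _ h')]; apply h'|| apply h.
Qed.

Lemma per_exists N x : 0 < N -> iter N S x = x -> exists k, isper S k x.
Proof.
move=> N0 hN.
have ex : exists j, (0 < j) && (ceq (iter j S x) x).
  by exists N; rewrite N0; apply/ceqP.
case: (ex_minnP ex) => k /andP[k0 /ceqP hk] hmin.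
exists k; split=> //; split=> // j /andP[j0 jk] hj.
have := hmin j; rewrite j0 /=.
have -> : ceq (iter j S x) x by apply/ceqP.
by move=> /(_ isT); rewrite leqNgt jk.
Qed.

Lemma iter_cancel k x i j : 0 < k -> iter k S x = x ->
  (iter j S (iter i S x) = iter i S x <-> iter j S x = x).
Proof.
move=> k0 hk; split=> h.
  have e1 : iter (k * i - i) S (iter j S (iter i S x)) = iter j S x.
    have le : i <= k * i by rewrite leq_pmull.
    rewrite -!iterD; have -> : k * i - i + j + i = j + i * k by lia.
    by rewrite iterD iter_mul.
  by rewrite -e1 h -iterD subnK ?leq_pmull // mulnC iter_mul.
by rewrite -iterD addnC iterD h.
Qed.

Lemma per_shift k x i : isper S k x -> isper S k (iter i S x).
Proof.
move=> h; have [k0 [hk _]] := h; apply: dvd_per => // j.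
by rewrite (iter_cancel _ _ k0 hk); apply: per_dvd.
Qed.

End Per.

Lemma coprime_gcd_div L m : 0 < L -> coprime (L %/ gcdn L m) (m %/ gcdn L m).
Proof.
move=> L0; set g := gcdn L m.
have g0 : 0 < g by rewrite gcdn_gt0 L0.
have eL : L = L %/ g * g by rewrite divnK // dvdn_gcdl.
have em : m = m %/ g * g by rewrite divnK // dvdn_gcdr.
have : g = gcdn (L %/ g) (m %/ g) * g by rewrite muln_gcdl -eL -em.
rewrite /coprime -{1}(mul1n g) => /eqP; rewrite eqn_pmul2r // => /eqP <-.
by [].
Qed.

Lemma per_iterm (X : Type) (T : X -> X) L m x : isper T L x -> 0 < m ->
  isper (iter m T) (L %/ gcdn L m) x.
Proof.
move=> h m0; have [L0 _] := h.
set g := gcdn L m.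
have g0 : 0 < g by rewrite gcdn_gt0 L0.
have eL : L = L %/ g * g by rewrite divnK // dvdn_gcdl.
have em : m = m %/ g * g by rewrite divnK // dvdn_gcdr.
apply: dvd_per.
  by rewrite divn_gt0 // dvdn_leq // dvdn_gcdl.
move=> j; rewrite -iterM (per_dvd _ h).
rewrite {1}eL {1}em mulnA dvdn_pmul2r // Gauss_dvdl //.
exact: coprime_gcd_div.
Qed.

Lemma InPg (T : eqType) (x : T) (s : seq T) : reflect (In x s) (x \in s).
Proof.
elim: s => [|a s IH] /=; first by constructor.
rewrite inE; apply: (iffP orP) => [[/eqP->|/IH]|[->|/IH]]; auto.
Qed.

Lemma pJaJ_part m n : 0 < m -> 0 < n -> pJaJ m n = m`_(\pi(n)^').
Proof.
move=> m0 n0; rewrite /pJaJ /partn.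
rewrite (big_mkcond (fun p => p \in \pi(n)^')).
have -> : \prod_(p <- primes m | ~~ (p %| n)) p ^ logn p m =
    \prod_(p <- primes m) (if p \in \pi(n)^' then p ^ logn p m else 1).
  rewrite big_mkcond; apply: eq_big_seq => p hp.
  move: hp; rewrite mem_primes => /and3P[pp _ _].
  rewrite !inE /= mem_primes pp n0 /=.
  by [].
have -> : \big[muln/1]_(0 <= i < m.+1)
     (if i \in \pi(n)^' then i ^ logn i m else 1) =
   \big[muln/1]_(i <- index_iota 0 m.+1 | i \in primes m)
     (if i \in \pi(n)^' then i ^ logn i m else 1).
  rewrite [RHS]big_mkcond; apply: eq_bigr => p _.
  case: (boolP (p \in primes m)) => // hp; have -> : logn p m = 0.
    by apply/eqP; rewrite -leqn0 leqNgt logn_gt0 (negbTE hp).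
  by rewrite if_same.
rewrite -[in RHS]big_filter; apply: perm_big.
apply: uniq_perm; first exact: primes_uniq.
  by rewrite filter_uniq // iota_uniq.
move=> p; rewrite mem_filter mem_iota /=.
case hp: (p \in primes m) => //=; move: hp; rewrite mem_primes => /and3P[_ _ pm].
by rewrite add0n ltnS dvdn_leq.
Qed.

Lemma NT m n L : 0 < m -> 0 < n -> 0 < L ->
  (n == L %/ gcdn L m) =
  (L \in map (fun d => m * n %/ d) (divisors (pJaJ m n))).
Proof.
move=> m0 n0 L0.
have P0 : 0 < pJaJ m n by rewrite pJaJ_part // part_gt0.
apply/eqP/mapP.
- move=> e.
  set g := gcdn L m.
  have g0 : 0 < g by rewrite gcdn_gt0 L0.
  have eL : L = L %/ g * g by rewrite divnK // dvdn_gcdl.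
  have em : m = m %/ g * g by rewrite divnK // dvdn_gcdr.
  have cop : coprime (L %/ g) (m %/ g) by apply: coprime_gcd_div.
  have m'0 : 0 < m %/ g by move: m0; rewrite {1}em muln_gt0 => /andP[].
  exists (m %/ g).
    rewrite -dvdn_divisors // pJaJ_part //.
    have pn : (\pi(n)^').-nat (m %/ g) by rewrite -coprime_pi' // e.
    rewrite -(part_pnat_id pn); apply: partn_dvd => //.
    by rewrite {2}em dvdn_mulr.
  rewrite e; move: (L %/ g) (m %/ g) m'0 eL em => L' m' m'0 -> ->.
  by rewrite mulnAC -mulnA mulKn.
- move=> [d hd ->].
  move: hd; rewrite -dvdn_divisors // => hd.
  have d0 : 0 < d by apply: dvdn_gt0 hd.
  have dm : d %| m by apply: dvdn_trans hd _; rewrite pJaJ_part // dvdn_part.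
  have cop : coprime n d.
    rewrite coprime_pi' //; apply: (@pnat_dvd d (pJaJ m n) (\pi(n)^') hd).
    by rewrite pJaJ_part // part_pnat.
  case/dvdnP: dm => e em; move: m0; rewrite em muln_gt0 => /andP[e0 _].
  rewrite mulnAC mulnK // -muln_gcdr (eqP cop) muln1 mulKn //.
Qed.

Lemma sum_b2n (T : Type) (a : pred T) (s : seq T) :
  \sum_(i <- s) (a i : nat) = count a s.
Proof. by elim: s => [|x s IH]; rewrite ?big_nil ?big_cons ?IH. Qed.

Lemma sum_const_seq (T : Type) (s : seq T) c : \sum_(i <- s) c = size s * c.
Proof. by elim: s => [|x s IH]; rewrite ?big_nil ?big_cons ?IH ?mulSn. Qed.

Lemma length_size (T : Type) (s : seq T) : length s = size s.
Proof. by elim: s => //= x s ->. Qed.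

Lemma count_mem_sub (T : eqType) (s E : seq T) :
  uniq s -> uniq E -> {subset s <= E} -> count (mem s) E = size s.
Proof.
move=> us uE sub; rewrite -size_filter; apply: perm_size.
apply: uniq_perm => //; first by rewrite filter_uniq.
move=> x; rewrite mem_filter /=; case h: (x \in s) => //=; exact: sub.
Qed.

Section Orb.
Variables (X : Type) (S : X -> X) (k : nat).
Hypothesis k0 : 0 < k.

Lemma orbit_mem y z : iter k S y = y ->
  (In z (orbit_list S k y) <-> exists j, z = iter j S y).
Proof.
move=> hy; rewrite orbit_listE in_map_iff; split.
  by move=> [j [<- _]]; exists j.
move=> [j ->]; exists (j %% k); split; first by rewrite -iter_mod.
apply/(@InPg nat); by rewrite mem_iota add0n ltn_mod k0.
Qed.

Lemma per_orbit_uniq x : isper S k x -> uniq (orbit_list S k x : seq (C X)).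
Proof.
move=> h; rewrite orbit_listE map_inj_in_uniq; first exact: iota_uniq.
have hd : forall a b, a < b < k -> iter a S x = iter b S x -> False.
  move=> a b /andP[ab bk] e.
  have : iter (b - a) S (iter a S x) = iter a S x.
     rewrite -iterD subnK. by []. exact: ltnW.
  have [_ [hk hmin]] := h.
  rewrite (iter_cancel _ _ k0 hk). apply: hmin. lia.
move=> a b; rewrite !mem_iota !add0n /= => ha hb e.
case: (ltngtP a b) => [ab|ba|//]; exfalso.
  by apply: (hd a b) => //; rewrite ab.
by apply: (hd b a) => //; rewrite ba.
Qed.

Definition phi (x : C X) : C (X -> Prop) := fun y => In y (orbit_list S k x).

Lemma closed_per A : closed_orbit S k A -> exists x, isper S k x /\ A = phi x.
Proof.
move=> [x [hx [-> nd]]]; exists x; split=> //; split=> //; split=> // j /andP[j0 jk] e.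
move: (NoDup_uniq (nd : NoDup (orbit_list S k x : seq (C X)))).
rewrite orbit_listE; case: k k0 jk => // k' _ jk.
rewrite /= => /andP[/negP nin _]; apply: nin.
rewrite -{1}e.
apply/mapP; exists j => //; by rewrite mem_iota j0.
Qed.

Lemma phi_eq x y : isper S k x -> isper S k y ->
  (phi x = phi y <-> In x (orbit_list S k y)).
Proof.
move=> [_ [hx _]] [_ [hy _]]; split.
  move=> e; have : phi x x by apply/(orbit_mem _ hx); exists 0.
  by rewrite e.
move=> /(orbit_mem _ hy) [i ->]; apply: functional_extensionality => z.
apply: propositional_extensionality; rewrite /phi.
have hiy : iter k S (iter i S y) = iter i S y.
  by rewrite -iterD addnC iterD hy.
rewrite (orbit_mem _ hiy) (orbit_mem _ hy); split.
  by move=> [j ->]; exists (j + i); rewrite iterD.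
move=> [j ->]; exists (j + (k * i - i)).
have le : i <= k * i by rewrite leq_pmull.
rewrite -iterD; have -> : j + (k * i - i) + i = j + i * k by lia.
by rewrite iterD iter_mul.
Qed.

Lemma count_orbits (U : seq (C X)) :
  uniq U -> (forall x, isper S k x -> x \in U) ->
  count (fun x => cdec (isper S k x)) U = k * O_count S k.
Proof.
move=> uU hU.
set E : seq (C X) := filter (fun x => cdec (isper S k x)) U.
have uE : uniq E by rewrite filter_uniq.
have memE : forall x, x \in E <-> isper S k x.
  move=> x; rewrite mem_filter; split.
    by move=> /andP[/cdecP].
  by move=> h; rewrite hU // andbT; apply/cdecP.
set oL : seq (C (X -> Prop)) := undup (map phi E).
have hc : has_card (closed_orbit S k) (size oL).
  exists oL; split; first by apply: uniq_NoDup; apply: undup_uniq.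
  split; last by rewrite length_size.
  move=> A; split.
    move=> /closed_per [x [hx ->]]; apply/InP.
    by rewrite mem_undup; apply: map_f; apply/memE.
  move=> /InP; rewrite mem_undup => /mapP [x /memE hx ->].
  have [_ [hk _]] := hx.
  exists x; split=> //; split=> //.
  apply: uniq_NoDup; exact: per_orbit_uniq.
rewrite (O_countE hc) -size_filter -/E.
transitivity (\sum_(x <- E) \sum_(A <- oL) ((phi x == A) : nat)).
  rewrite [RHS](@eq_big_seq _ _ _ _ _ _ (fun _ => 1)); first by rewrite sum_const_seq muln1.
  move=> x xE.
  rewrite sum_b2n (eq_count (a2 := pred1 (phi x))); last by move=> A; rewrite /= eq_sym.
  by rewrite count_uniq_mem ?undup_uniq // mem_undup map_f.
rewrite exchange_big /= mulnC -sum_const_seq; apply: eq_big_seq => A.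
rewrite mem_undup => /mapP [x0 /memE h0 ->].
rewrite sum_b2n.
rewrite (eq_in_count (a2 := mem (orbit_list S k x0 : seq (C X)))); last first.
  move=> x /memE hx /=; apply/idP/idP.
    by move=> /eqP /(phi_eq hx h0) /InP.
  by move=> /InP /(phi_eq hx h0) ->.
rewrite count_mem_sub //; first by rewrite orbit_listE size_map size_iota.
  exact: per_orbit_uniq.
move=> z /InP; have [_ [hk _]] := h0.
move=> /(orbit_mem _ hk) [i ->]; apply/memE; exact: per_shift.
Qed.
End Orb.

Unset Implicit Arguments.

Theorem theorem2p1 (X : Type) (T : X -> X)
  (hfin : forall k : nat, (1 <= k)%N -> fix_finite T k)
  (m n : nat) (hm : (1 <= m)%N) (hn : (1 <= n)%N) :
  O_count (iter m T) n =
  (\sum_(d <- divisors (pJaJ m n)) (m %/ d) * O_count T (m * n %/ d))%N.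
Proof.
set N := m * n.
have N0 : 0 < N by rewrite /N muln_gt0 hm hn.
have [lN hlN] := hfin N N0.
set U : seq (C X) := undup (lN : seq (C X)).
have uU : uniq U := undup_uniq _.
have memU : forall x, x \in U <-> iter N T x = x.
  move=> x; rewrite mem_undup hlN; split; [move/InP | move/InP]; by [].
have P0 : 0 < pJaJ m n by rewrite pJaJ_part // part_gt0.
have hdiv : forall d, d \in divisors (pJaJ m n) -> d %| m.
  move=> d; rewrite -dvdn_divisors // => hd; apply: dvdn_trans hd _.
  by rewrite pJaJ_part // dvdn_part.
have hS : count (fun x => cdec (isper (iter m T) n x)) U = n * O_count (iter m T) n.
  apply: count_orbits => // x [_ [hx _]]; apply/memU.
  by rewrite /N mulnC iterM.
apply/eqP; rewrite -(eqn_pmul2l hn) -hS big_distrr /=; apply/eqP.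
have hT : forall d, d \in divisors (pJaJ m n) ->
    n * (m %/ d * O_count T (m * n %/ d)) =
    count (fun x => cdec (isper T (m * n %/ d) x)) U.
  move=> d hd; have dm := hdiv d hd.
  have d0 : 0 < d by apply: dvdn_gt0 dm.
  have dmn : d %| m * n by apply: dvdn_mulr.
  have q0 : 0 < m * n %/ d.
    by rewrite divn_gt0 // (leq_trans (dvdn_leq hm dm)) // leq_pmulr.
  rewrite mulnA muln_divA // (mulnC n m) count_orbits //.
  move=> x hx; apply/memU; apply/(per_dvd _ hx).
  by rewrite /N -{2}(divnK dmn) dvdn_mulr.
rewrite (eq_big_seq _ hT) /=.
have cE : forall (P : X -> Prop),
    count (fun x : X => cdec (P x)) U = \sum_(x <- U) (cdec (P x) : nat).
  by move=> P; rewrite sum_b2n.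
rewrite (cE (isper (iter m T) n)).
rewrite [RHS](eq_bigr _ (fun d _ => cE (isper T (m * n %/ d)))).

rewrite exchange_big /=; apply: eq_big_seq => x /memU hx.
have [L hL] := per_exists N0 hx.
have [L0 _] := hL.
have ispT : forall k, cdec (isper T k x) = (k == L).
  move=> k; apply/cdecP/eqP => [h|->//]; exact: per_unique h hL.
have -> : cdec (isper (iter m T) n x) = (n == L %/ gcdn L m).
  apply/cdecP/eqP => [h|->]; last exact: per_iterm.
  exact: per_unique h (per_iterm hL hm).
under eq_bigr do rewrite ispT.
rewrite sum_b2n (eq_count (a2 := preim (fun d => m * n %/ d) (pred1 L))); last first.
  by move=> d.
rewrite -count_map count_uniq_mem ?NT //.
rewrite map_inj_in_uniq ?divisors_uniq // => d1 d2 h1 h2 e.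
have e1 := divnK (dvdn_mulr n (hdiv d1 h1)).
have e2 := divnK (dvdn_mulr n (hdiv d2 h2)).
have q0 : 0 < m * n %/ d1.
  by rewrite divn_gt0 ?(dvdn_gt0 hm (hdiv d1 h1)) // (leq_trans (dvdn_leq hm (hdiv d1 h1))) // leq_pmulr.
apply/eqP; rewrite -(eqn_pmul2l q0); apply/eqP.
by rewrite [in RHS]e e1 e2.
Qed.
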